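(* Let $(M,P,g)$ be a 4-dimensional Riemannian almost product manifold with $\operatorname{tr}P=0$. A curvature-like tensor $L$ on $M$ is a Riemannian $P$-tensor if and only if $$L=\frac{1}{8}\left\{\tau(L)(\pi_1+\pi_2)+\tau^*(L)\pi_3\right\}.$$
   Context: A Riemannian almost product manifold $(M,P,g)$: $M$ smooth, $P$ a $(1,1)$-tensor field with $P^2=\mathrm{id}$, $g$ Riemannian with $g(Px,Py)=g(x,y)$. A curvature-like tensor is a $(0,4)$-tensor $L$ with $L(x,y,z,w)=-L(y,x,z,w)=-L(x,y,w,z)$ and $L(x,y,z,w)+L(y,z,x,w)+L(z,x,y,w)=0$; it is a Riemannian $P$-tensor if moreover $L(x,y,Pz,Pw)=L(x,y,z,w)$. Put $\widetilde g(x,y)=g(x,Py)$. For a $(0,2)$-tensor $S$ let $\psi_1(S)(x,y,z,w)=g(y,z)S(x,w)-g(x,z)S(y,w)+S(y,z)g(x,w)-S(x,z)g(y,w)$ and $\psi_2(S)(x,y,z,w)=\psi_1(S)(x,y,Pz,Pw)$; set $\pi_1=\tfrac12\psi_1(g)$, $\pi_2=\tfrac12\psi_2(g)$, $\pi_3=\psi_1(\widetilde g)$. For a basis $\{e_i\}$ with $g^{ij}$ the inverse of $(g(e_i,e_j))$: $\rho(L)(y,z)=\sum g^{ij}L(e_i,y,z,e_j)$, $\tau(L)=\sum g^{ij}\rho(L)(e_i,e_j)$, $\rho^*(L)(y,z)=\sum g^{ij}L(e_i,y,z,Pe_j)$, $\tau^*(L)=\sum g^{ij}\rho^*(L)(e_i,e_j)$.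 *)

(* Defs.v *)
(* Pointwise (tangent-space) linear-algebra model of a
   Riemannian almost product manifold: vectors are row vectors 'rV[R]_n,
   the metric is a matrix G with g(x,y) = x G y^T, P acts by x |-> x *m P. *)
From HB Require Import structures.
From mathcomp Require Import all_boot all_order all_algebra.
Set Implicit Arguments. Unset Strict Implicit. Unset Printing Implicit Defensive.
Import Order.TTheory GRing.Theory Num.Theory.
Local Open Scope ring_scope.

Section Defs.
Variables (R : realFieldType) (n : nat).
Notation V := 'rV[R]_n.

Definition gform (G : 'M[R]_n) (x y : V) : R := (x *m G *m y^T) 0 0.
Definition gtilde (G P : 'M[R]_n) (x y : V) : R := gform G x (y *m P).
Definition ebasis (i : 'I_n) : V := delta_mx 0 i.

Definition almost_product (G P : 'M[R]_n) : Prop :=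
  [/\ G^T = G,
      (forall x : V, x != 0 -> 0 < gform G x x),
      P *m P = 1%:M
    & forall x y : V, gform G (x *m P) (y *m P) = gform G x y].

Definition tensor4 := V -> V -> V -> V -> R.

Definition multilinear4 (L : tensor4) : Prop :=
  [/\ (forall a x x' y z w, L (a *: x + x') y z w = a * L x y z w + L x' y z w),
      (forall a x y y' z w, L x (a *: y + y') z w = a * L x y z w + L x y' z w),
      (forall a x y z z' w, L x y (a *: z + z') w = a * L x y z w + L x y z' w)
    & (forall a x y z w w', L x y z (a *: w + w') = a * L x y z w + L x y z w')].

Definition curvature_like (L : tensor4) : Prop :=
  [/\ multilinear4 L,
      (forall x y z w, L x y z w = - L y x z w),
      (forall x y z w, L x y z w = - L x y w z)
    & (forall x y z w, L x y z w + L y z x w + L z x y w = 0)].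

Definition riemannian_P_tensor (P : 'M[R]_n) (L : tensor4) : Prop :=
  curvature_like L /\ forall x y z w, L x y (z *m P) (w *m P) = L x y z w.

Definition psi1 (G : 'M[R]_n) (S : V -> V -> R) : tensor4 :=
  fun x y z w => gform G y z * S x w - gform G x z * S y w
                 + S y z * gform G x w - S x z * gform G y w.
Definition psi2 (G P : 'M[R]_n) (S : V -> V -> R) : tensor4 :=
  fun x y z w => psi1 G S x y (z *m P) (w *m P).

Definition pi1 (G : 'M[R]_n) : tensor4 :=
  fun x y z w => 2%:R^-1 * psi1 G (gform G) x y z w.
Definition pi2 (G P : 'M[R]_n) : tensor4 :=
  fun x y z w => 2%:R^-1 * psi2 G P (gform G) x y z w.
Definition pi3 (G P : 'M[R]_n) : tensor4 := psi1 G (gtilde G P).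

Definition rho (G : 'M[R]_n) (L : tensor4) (y z : V) : R :=
  \sum_(i < n) \sum_(j < n) invmx G i j * L (ebasis i) y z (ebasis j).
Definition tau (G : 'M[R]_n) (L : tensor4) : R :=
  \sum_(i < n) \sum_(j < n) invmx G i j * rho G L (ebasis i) (ebasis j).
Definition rhostar (G P : 'M[R]_n) (L : tensor4) (y z : V) : R :=
  \sum_(i < n) \sum_(j < n) invmx G i j * L (ebasis i) y z (ebasis j *m P).
Definition taustar (G P : 'M[R]_n) (L : tensor4) : R :=
  \sum_(i < n) \sum_(j < n) invmx G i j * rhostar G P L (ebasis i) (ebasis j).

End Defs.

(* Main.v *)
Require Import Defs.
From HB Require Import structures.
From mathcomp Require Import all_boot all_order all_algebra.
From mathcomp Require Import ring lra.
Import Order.TTheory GRing.Theory Num.Theory.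
Local Open Scope ring_scope.
Set Implicit Arguments. Unset Strict Implicit. Unset Printing Implicit Defensive.

Section Basics.
Variables (R : realFieldType) (n : nat).
Implicit Types (A B M : 'M[R]_n) (x y z w u v : 'rV[R]_n).

Lemma gformE A x y : gform A x y = (x *m A *m y^T) 0 0.
Proof. by []. Qed.

Lemma gform_ee A i j : gform A (ebasis R i) (ebasis R j) = A i j.
Proof. by rewrite /gform /ebasis -rowE trmx_delta -colE !mxE. Qed.

Lemma gform_el A i u : gform A (ebasis R i) u = (A *m u^T) i 0.
Proof. by rewrite /gform /ebasis -mulmxA -rowE mxE. Qed.

Lemma gform_er A u j : gform A u (ebasis R j) = (u *m A) 0 j.
Proof. by rewrite /gform /ebasis trmx_delta -colE mxE. Qed.

Lemma gformDl A a x x' y : gform A (a *: x + x') y = a * gform A x y + gform A x' y.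
Proof. by rewrite /gform !mulmxDl -!scalemxAl !mxE. Qed.

Lemma gformDr A a x y y' : gform A x (a *: y + y') = a * gform A x y + gform A x y'.
Proof. by rewrite /gform linearD linearZ /= mulmxDr -!scalemxAr !mxE. Qed.

Lemma gformDm a A B x y : gform (a *: A + B) x y = a * gform A x y + gform B x y.
Proof. by rewrite /gform mulmxDr mulmxDl -!scalemxAr -scalemxAl !mxE. Qed.

Lemma gform_mull A B x y : gform A (x *m B) y = gform (B *m A) x y.
Proof. by rewrite /gform !mulmxA. Qed.

Lemma gform_mulr A B x y : gform A x (y *m B) = gform (A *m B^T) x y.
Proof. by rewrite /gform trmx_mul !mulmxA. Qed.

Lemma gform_sym A x y : A^T = A -> gform A x y = gform A y x.
Proof.
move=> hA; rewrite /gform -[in LHS](trmxK (x *m A *m y^T)) mxE.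
by rewrite !trmx_mul trmxK hA mulmxA.
Qed.

Lemma sum_tr M B : \sum_(i < n) \sum_(j < n) M i j * B i j = \tr (M *m B^T).
Proof.
rewrite /mxtrace; apply: eq_bigr => i _; rewrite mxE; apply: eq_bigr => j _.
by rewrite mxE.
Qed.

Lemma sum_bil M A B y z :
  \sum_(i < n) \sum_(j < n) M i j * ((A *m z^T) i 0 * (y *m B) 0 j)
  = gform (B *m M^T *m A) y z.
Proof.
rewrite /gform !mulmxA -(mulmxA _ A).
move: (A *m z^T) (y *m B) => c u.
rewrite [RHS]mxE; apply: eq_bigr => i _.
rewrite [X in _ = X * _]mxE mulr_suml; apply: eq_bigr => j _; rewrite !mxE.
by ring.
Qed.
Lemma gformBm a A B x y : gform (a *: A - B) x y = a * gform A x y - gform B x y.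
Proof. by rewrite /gform mulmxBr mulmxBl -scalemxAr -scalemxAl !mxE. Qed.

Definition Kt A B : tensor4 R n :=
  fun x y z w => gform A y z * gform B x w - gform A x z * gform B y w.

Lemma rho_Kt G A B y z :
  rho G (Kt A B) y z
  = gform (\tr (invmx G *m B^T) *: A - B *m (invmx G)^T *m A) y z.
Proof.
rewrite gformBm -sum_tr -sum_bil /rho /Kt mulr_suml -sumrB.
apply: eq_bigr => i _; rewrite mulr_suml -sumrB; apply: eq_bigr => j _.
rewrite gform_ee gform_el gform_er; ring.
Qed.

Lemma tau_form G (L : tensor4 R n) C :
  (forall y z, rho G L y z = gform C y z) -> tau G L = \tr (invmx G *m C^T).
Proof.
move=> h; rewrite -sum_tr /tau; apply: eq_bigr => i _; apply: eq_bigr => j _.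
by rewrite h gform_ee.
Qed.

Lemma rho_comb G (L T1 T2 : tensor4 R n) a b :
  (forall x y z w, L x y z w = a * T1 x y z w + b * T2 x y z w) ->
  forall y z, rho G L y z = a * rho G T1 y z + b * rho G T2 y z.
Proof.
move=> h y z; rewrite /rho !mulr_sumr -big_split; apply: eq_bigr => i _.
rewrite !mulr_sumr -big_split; apply: eq_bigr => j _.
by rewrite h mulrDr (mulrCA _ a) (mulrCA _ b).
Qed.

Lemma tau_comb G (L T1 T2 : tensor4 R n) a b :
  (forall x y z w, L x y z w = a * T1 x y z w + b * T2 x y z w) ->
  tau G L = a * tau G T1 + b * tau G T2.
Proof.
move=> h; rewrite /tau !mulr_sumr -big_split; apply: eq_bigr => i _.
rewrite !mulr_sumr -big_split; apply: eq_bigr => j _.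
by rewrite (rho_comb G h) mulrDr (mulrCA _ a) (mulrCA _ b).
Qed.

Lemma tau_Kt G A B :
  tau G (Kt A B) = \tr (invmx G *m B^T) * \tr (invmx G *m A^T)
                   - \tr (invmx G *m (B *m (invmx G)^T *m A)^T).
Proof.
rewrite (tau_form (rho_Kt G A B)) linearB linearZ /= mulmxBr -scalemxAr.
by rewrite linearB linearZ.
Qed.

Lemma taustarE G P (L : tensor4 R n) :
  taustar G P L = tau G (fun x y z w => L x y z (w *m P)).
Proof. by []. Qed.

Lemma Kt_mulP A B P x y z w : Kt A B x y z (w *m P) = Kt A (B *m P^T) x y z w.
Proof. by rewrite /Kt !gform_mulr. Qed.

Lemma gformZl A a x y : gform A (a *: x) y = a * gform A x y.
Proof. by rewrite /gform -!scalemxAl mxE. Qed.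
Lemma gformZr A a x y : gform A x (a *: y) = a * gform A x y.
Proof. by rewrite /gform linearZ /= -scalemxAr mxE. Qed.
Lemma gformZm A a x y : gform (a *: A) x y = a * gform A x y.
Proof. by rewrite /gform -scalemxAr -scalemxAl mxE. Qed.

Lemma Kt_mulP2 A B Q x y z w :
  Kt A B x y (z *m Q) (w *m Q) = Kt (A *m Q^T) (B *m Q^T) x y z w.
Proof. by rewrite /Kt !gform_mulr. Qed.

Lemma pi1_ml (G : 'M[R]_n) : multilinear4 (pi1 G).
Proof. by split=> *; rewrite /pi1 /psi1 ?(gformDl, gformDr); ring. Qed.
Lemma pi1_A12 (G : 'M[R]_n) x y z w : pi1 G x y z w = - pi1 G y x z w.
Proof. rewrite /pi1 /psi1; ring. Qed.
Lemma pi1_A34 (G : 'M[R]_n) x y z w : pi1 G x y z w = - pi1 G x y w z.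
Proof. rewrite /pi1 /psi1; ring. Qed.

End Basics.

Section Tens.
Variables (R : realFieldType) (n : nat).

Lemma lin_split (f : 'rV[R]_n -> R) :
  (forall a x x', f (a *: x + x') = a * f x + f x') ->
  (forall x x', f (x + x') = f x + f x') /\ (forall a x, f (a *: x) = a * f x).
Proof.
move=> h; have f0 : f 0 = 0.
  have := h 1 0 0; rewrite scale1r addr0 mul1r => e; lra.
split=> [x x'|a x]; first by have := h 1 x x'; rewrite scale1r mul1r.
by have := h a x 0; rewrite addr0 f0 addr0.
Qed.

Variables (T : tensor4 R n) (hT : multilinear4 T).

Lemma TD1 x x' y z w : T (x + x') y z w = T x y z w + T x' y z w.
Proof. case: hT => h _ _ _; by case: (@lin_split (fun x => T x y z w) (fun a x x' => h a x x' y z w)) => ->. Qed.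
Lemma TZ1 a x y z w : T (a *: x) y z w = a * T x y z w.
Proof. case: hT => h _ _ _; by case: (@lin_split (fun x => T x y z w) (fun a x x' => h a x x' y z w)) => _ ->. Qed.
Lemma TD2 x y y' z w : T x (y + y') z w = T x y z w + T x y' z w.
Proof. case: hT => _ h _ _; by case: (@lin_split (fun y => T x y z w) (fun a y y' => h a x y y' z w)) => ->. Qed.
Lemma TZ2 a x y z w : T x (a *: y) z w = a * T x y z w.
Proof. case: hT => _ h _ _; by case: (@lin_split (fun y => T x y z w) (fun a y y' => h a x y y' z w)) => _ ->. Qed.
Lemma TD3 x y z z' w : T x y (z + z') w = T x y z w + T x y z' w.
Proof. case: hT => _ _ h _; by case: (@lin_split (fun z => T x y z w) (fun a z z' => h a x y z z' w)) => ->. Qed.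
Lemma TZ3 a x y z w : T x y (a *: z) w = a * T x y z w.
Proof. case: hT => _ _ h _; by case: (@lin_split (fun z => T x y z w) (fun a z z' => h a x y z z' w)) => _ ->. Qed.
Lemma TD4 x y z w w' : T x y z (w + w') = T x y z w + T x y z w'.
Proof. case: hT => _ _ _ h; by case: (@lin_split (fun w => T x y z w) (fun a w w' => h a x y z w w')) => ->. Qed.
Lemma TZ4 a x y z w : T x y z (a *: w) = a * T x y z w.
Proof. case: hT => _ _ _ h; by case: (@lin_split (fun w => T x y z w) (fun a w w' => h a x y z w w')) => _ ->. Qed.

Hypothesis A12 : forall x y z w, T x y z w = - T y x z w.
Hypothesis A34 : forall x y z w, T x y z w = - T x y w z.

Lemma T0a x z w : T x x z w = 0.
Proof. have := A12 x x z w; lra. Qed.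
Lemma T0b x y z : T x y z z = 0.
Proof. have := A34 x y z z; lra. Qed.

Lemma tensor2 u v a0 a1 b0 b1 c0 c1 d0 d1 :
  T (a0 *: u + a1 *: v) (b0 *: u + b1 *: v) (c0 *: u + c1 *: v) (d0 *: u + d1 *: v)
  = (a0 * b1 - a1 * b0) * (c0 * d1 - c1 * d0) * T u v u v.
Proof.
rewrite !TD1 !TD2 !TD3 !TD4 !TZ1 !TZ2 !TZ3 !TZ4 !T0a !T0b.
have e1 : T u v v u = - T u v u v by rewrite A34.
have e2 : T v u u v = - T u v u v by rewrite A12.
have e3 : T v u v u = T u v u v by rewrite A12 A34 opprK.
rewrite e1 e2 e3; ring.
Qed.
End Tens.

Lemma pair_sym (R : realFieldType) n (L : tensor4 R n) : curvature_like L ->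
  forall x y z w, L x y z w = L z w x y.
Proof.
case=> _ A12 A34 B x y z w.
have := B x y z w; have := B y z w x; have := B z w x y; have := B w x y z.
have := A12 y z x w; have := A12 z x y w;
have := A12 z w y x; have := A12 w y z x;
have := A12 w x z y; have := A12 x z w y;
have := A12 x y w z; have := A12 y w x z.
have := A34 y z x w; have := A34 z x y w;
have := A34 z w y x; have := A34 w y z x;
have := A34 w x z y; have := A34 x z w y;
have := A34 x y w z; have := A34 y w x z.
have := A34 x y z w; have := A34 z w x y.
have := A12 x y z w; have := A12 z w x y.
lra.
Qed.

Section Rank.
Variables (R : realFieldType) (n : nat).

Lemma BC_aux r (E : 'M[R]_n) (C : 'M[R]_(n, r)) (B : 'M[R]_(r, n)) C' B' :
  E *m E = E -> C *m B = E -> C' *m C = 1%:M -> B *m B' = 1%:M -> B *m C = 1%:M.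
Proof.
move=> hEE hCB hC hB.
transitivity (C' *m E *m E *m B').
  by rewrite -hCB !mulmxA hC mul1mx -!mulmxA hB mulmx1.
by rewrite -(mulmxA C' E E) hEE -hCB !mulmxA hC mul1mx hB.
Qed.

Lemma trace_rank (E : 'M[R]_n) : E *m E = E -> \tr E = (\rank E)%:R.
Proof.
move=> hEE.
have hCB := mulmx_base E.
case/row_fullP: (col_base_full E) => C' hC.
case/row_freeP: (row_base_free E) => B' hB.
have BC := BC_aux hEE hCB hC hB.
by rewrite -{1}hCB mxtrace_mulC BC mxtrace1.
Qed.

Lemma basis2 (E : 'M[R]_n) : \rank E = 2%N ->
  exists r0 r1 : 'rV[R]_n,
    [/\ (r0 <= E)%MS, (r1 <= E)%MS,
        (forall a b, a *: r0 + b *: r1 = 0 -> a = 0 /\ b = 0)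
      & (forall v, (v <= E)%MS -> exists a b, v = a *: r0 + b *: r1)].
Proof.
move=> hr.
move: (row_base E) (row_base_free E) (eq_row_base E) hr.
move: (\rank E) => r B hB hE hr; subst r.
have sum2 : forall u : 'rV[R]_2, u *m B = u 0 0 *: row 0 B + u 0 1 *: row 1 B.
  move=> u; rewrite mulmx_sum_row big_ord_recl big_ord1.
  have -> : lift ord0 ord0 = 1 :> 'I_2 by apply: val_inj.
  by have -> : ord0 = 0 :> 'I_2 by apply: val_inj.
exists (row 0 B), (row 1 B); split.
- by rewrite -hE row_sub.
- by rewrite -hE row_sub.
- move=> a b hab.
  pose u : 'rV[R]_2 := \row_(i < 2) (if i == 0 then a else b).
  have : u *m B = 0 by rewrite sum2 !mxE.
  move/eqP; rewrite mulmx_free_eq0 // => /eqP hu.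
  have := congr1 (fun m : 'rV[R]_2 => m 0 0) hu.
  have := congr1 (fun m : 'rV[R]_2 => m 0 1) hu.
  by rewrite !mxE.
- move=> v; rewrite -hE => /submxP [D ->].
  by exists (D 0 0), (D 0 1); rewrite sum2.
Qed.
End Rank.

Section Main.
Variables (R : realFieldType) (G P : 'M[R]_4).
Hypothesis hGP : almost_product G P.
Hypothesis htr : \tr P = 0.

Lemma hGs : G^T = G. Proof. by case: hGP. Qed.
Lemma hpos (x : 'rV[R]_4) : x != 0 -> 0 < gform G x x. Proof. by case: hGP => _ h _ _; apply: h. Qed.
Lemma hPP : P *m P = 1%:M. Proof. by case: hGP. Qed.
Lemma hcomp x y : gform G (x *m P) (y *m P) = gform G x y. Proof. by case: hGP => _ _ _; apply. Qed.

Lemma hPGP : P *m G *m P^T = G.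
Proof. by apply/matrixP => i j; rewrite -!gform_ee -gform_mulr -gform_mull hcomp. Qed.

Lemma hPTPT : P^T *m P^T = 1%:M.
Proof. by rewrite -trmx_mul hPP trmx1. Qed.

Lemma hPG : P *m G = G *m P^T.
Proof. by rewrite -{2}hPGP -mulmxA hPTPT mulmx1. Qed.

Lemma Gunit : G \in unitmx.
Proof.
rewrite -row_free_unit; apply: inj_row_free => v hv; apply/eqP; apply: contraT => hv0.
by have := hpos hv0; rewrite /gform hv mul0mx mxE ltxx.
Qed.

Local Notation M := (invmx G).
Local Notation Gt := (G *m P^T).
Definition fT (X : 'M[R]_4) := \tr (M *m X^T).

Lemma MG : M *m G = 1%:M. Proof. exact: mulVmx Gunit. Qed.
Lemma GM : G *m M = 1%:M. Proof. exact: mulmxV Gunit. Qed.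
Lemma MT : M^T = M. Proof. by rewrite trmx_inv hGs. Qed.
Lemma GtT : Gt^T = Gt. Proof. by rewrite trmx_mul trmxK hGs hPG. Qed.

Lemma fG : fT G = 4%:R. Proof. by rewrite /fT hGs MG mxtrace1. Qed.
Lemma fGt : fT Gt = 0. Proof. by rewrite /fT GtT mulmxA MG mul1mx mxtrace_tr. Qed.
Lemma GMG : G *m M^T *m G = G. Proof. by rewrite MT GM mul1mx. Qed.
Lemma GMGt : G *m M^T *m Gt = Gt. Proof. by rewrite MT GM mul1mx. Qed.
Lemma GtMG : Gt *m M^T *m G = Gt. Proof. by rewrite MT -hPG -!mulmxA MG mulmx1. Qed.
Lemma GtMGt : Gt *m M^T *m Gt = G.
Proof. by rewrite MT -{1}hPG -!mulmxA (mulmxA M) MG mul1mx mulmxA hPGP. Qed.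
Lemma GtPT : Gt *m P^T = G. Proof. by rewrite -mulmxA hPTPT mulmx1. Qed.

Lemma tauK A B : tau G (Kt A B) = fT B * fT A - fT (B *m M^T *m A).
Proof. exact: tau_Kt. Qed.

Lemma tauGG : tau G (Kt G G) = 12%:R.
Proof. by rewrite tauK GMG fG -natrM -natrB. Qed.
Lemma tauGtGt : tau G (Kt Gt Gt) = - 4%:R.
Proof. by rewrite tauK GtMGt fG fGt mul0r sub0r. Qed.
Lemma tauGGt : tau G (Kt G Gt) = 0.
Proof. by rewrite tauK GtMG fGt mul0r subr0. Qed.
Lemma tauGtG : tau G (Kt Gt G) = 0.
Proof. by rewrite tauK GMGt fGt mulr0 subr0. Qed.

Lemma pi1K x y z w : pi1 G x y z w = Kt G G x y z w.
Proof. rewrite /pi1 /psi1 /Kt; by field. Qed.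
Lemma pi2K x y z w : pi2 G P x y z w = Kt Gt Gt x y z w.
Proof. rewrite /pi2 /psi2 /psi1 /Kt !gform_mulr; by field. Qed.
Lemma pi3K x y z w : pi3 G P x y z w = Kt G Gt x y z w + Kt Gt G x y z w.
Proof. rewrite /pi3 /psi1 /gtilde /Kt !gform_mulr; ring. Qed.

Lemma tauS12 : tau G (fun x y z w => Kt G G x y z w + Kt Gt Gt x y z w) = 8%:R.
Proof.
rewrite (@tau_comb _ _ _ _ (Kt G G) (Kt Gt Gt) 1 1); last by move=> *; rewrite !mul1r.
by rewrite tauGG tauGtGt !mul1r -natrB.
Qed.
Lemma tauS34 : tau G (fun x y z w => Kt G Gt x y z w + Kt Gt G x y z w) = 0.
Proof.
rewrite (@tau_comb _ _ _ _ (Kt G Gt) (Kt Gt G) 1 1); last by move=> *; rewrite !mul1r.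
by rewrite tauGGt tauGtG !mulr0 addr0.
Qed.

Lemma formula_of_decomp (L : tensor4 R 4) a b :
  (forall x y z w, L x y z w =
     a * (pi1 G x y z w + pi2 G P x y z w) + b * pi3 G P x y z w) ->
  forall x y z w : 'rV[R]_4,
     L x y z w = 8%:R^-1 * (tau G L * (pi1 G x y z w + pi2 G P x y z w)
                            + taustar G P L * pi3 G P x y z w).
Proof.
move=> h.
have tL : tau G L = a * 8%:R.
  rewrite (@tau_comb _ _ _ _ (fun x y z w => Kt G G x y z w + Kt Gt Gt x y z w)
             (fun x y z w => Kt G Gt x y z w + Kt Gt G x y z w) a b).
    by rewrite tauS12 tauS34 mulr0 addr0.
  by move=> x y z w; rewrite h pi1K pi2K pi3K.
have tS : taustar G P L = b * 8%:R.
  rewrite taustarE (@tau_comb _ _ _ _ (fun x y z w => Kt G Gt x y z w + Kt Gt G x y z w)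
             (fun x y z w => Kt G G x y z w + Kt Gt Gt x y z w) a b).
    by rewrite tauS12 tauS34 mulr0 add0r.
  by move=> x y z w; rewrite h pi1K pi2K pi3K !Kt_mulP !GtPT addrC.
move=> x y z w; rewrite tL tS h; by field.
Qed.

Definition Ep : 'M[R]_4 := 2%:R^-1 *: (1%:M + P).
Definition Em : 'M[R]_4 := 2%:R^-1 *: (1%:M - P).

Lemma EpP : Ep *m P = Ep.
Proof. by rewrite /Ep -scalemxAl mulmxDl mul1mx hPP addrC. Qed.
Lemma EmP : Em *m P = - Em.
Proof. by rewrite /Em -scalemxAl mulmxBl mul1mx hPP -scalerN opprB. Qed.
Lemma EpEm : Ep + Em = 1%:M.
Proof. apply/matrixP => i j; rewrite /Ep /Em !mxE; by field. Qed.
Lemma EpEp : Ep *m Ep = Ep.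
Proof.
rewrite {2}/Ep -scalemxAr mulmxDr mulmx1 EpP.
apply/matrixP => i j; rewrite !mxE; by field.
Qed.
Lemma EmEm : Em *m Em = Em.
Proof.
rewrite {2}/Em -scalemxAr mulmxBr mulmx1 EmP.
apply/matrixP => i j; rewrite !mxE; by field.
Qed.
Lemma trEp : \tr Ep = 2%:R.
Proof. rewrite /Ep linearZ linearD /= htr mxtrace1 addr0; by field. Qed.
Lemma trEm : \tr Em = 2%:R.
Proof. rewrite /Em linearZ linearB /= htr mxtrace1 subr0; by field. Qed.

Lemma decomp (x : 'rV[R]_4) : x = x *m Ep + x *m Em.
Proof. by rewrite -mulmxDr EpEm mulmx1. Qed.
Lemma xEpP (x : 'rV[R]_4) : x *m Ep *m P = x *m Ep.
Proof. by rewrite -mulmxA EpP. Qed.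
Lemma xEmP (x : 'rV[R]_4) : x *m Em *m P = - (x *m Em).
Proof. by rewrite -mulmxA EmP mulmxN. Qed.

Lemma EpGEp : Ep *m G *m Ep^T = 2%:R^-1 *: G + 2%:R^-1 *: Gt.
Proof.
have -> : Ep^T = 2%:R^-1 *: (1%:M + P^T) by rewrite /Ep linearZ /= linearD /= trmx1.
rewrite /Ep -scalemxAr -!scalemxAl mulmxDl mul1mx mulmxDr mulmx1 mulmxDl hPGP hPG.
apply/matrixP => i j; rewrite !mxE; by field.
Qed.
Lemma EmGEm : Em *m G *m Em^T = 2%:R^-1 *: G - 2%:R^-1 *: Gt.
Proof.
have -> : Em^T = 2%:R^-1 *: (1%:M - P^T) by rewrite /Em linearZ /= linearB /= trmx1.
rewrite /Em -scalemxAr -!scalemxAl mulmxBl mul1mx mulmxBr mulmx1 mulmxBl hPGP hPG.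
apply/matrixP => i j; rewrite !mxE; by field.
Qed.


Lemma pi1Ep x y z w :
  pi1 G (x *m Ep) (y *m Ep) (z *m Ep) (w *m Ep)
  = 4%:R^-1 * (pi1 G x y z w + pi2 G P x y z w + pi3 G P x y z w).
Proof.
rewrite !pi1K pi2K pi3K /Kt !gform_mull !gform_mulr EpGEp.
rewrite !gformDm !gformZm; by field.
Qed.
Lemma pi1Em x y z w :
  pi1 G (x *m Em) (y *m Em) (z *m Em) (w *m Em)
  = 4%:R^-1 * (pi1 G x y z w + pi2 G P x y z w - pi3 G P x y z w).
Proof.
rewrite !pi1K pi2K pi3K /Kt !gform_mull !gform_mulr EmGEm.
rewrite !gformBm !gformZm; by field.
Qed.

Section WithL.
Variable L : tensor4 R 4.
Hypothesis hL : curvature_like L.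
Hypothesis hPL : forall x y z w, L x y (z *m P) (w *m P) = L x y z w.

Let mlL : multilinear4 L. Proof. by case: hL. Qed.
Let A12 : forall x y z w, L x y z w = - L y x z w. Proof. by case: hL. Qed.
Let A34 : forall x y z w, L x y z w = - L x y w z. Proof. by case: hL. Qed.
Let BL : forall x y z w, L x y z w + L y z x w + L z x y w = 0. Proof. by case: hL. Qed.

Lemma V34a x y z w : L x y (z *m Ep) (w *m Em) = 0.
Proof. have := hPL x y (z *m Ep) (w *m Em); rewrite xEpP xEmP -scaleN1r (TZ4 mlL) => h; lra. Qed.
Lemma V34b x y z w : L x y (z *m Em) (w *m Ep) = 0.
Proof. have := hPL x y (z *m Em) (w *m Ep); rewrite xEpP xEmP -scaleN1r (TZ3 mlL) => h; lra. Qed.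
Lemma V12a x y z w : L (x *m Ep) (y *m Em) z w = 0.
Proof. by rewrite (pair_sym hL) V34a. Qed.
Lemma V12b x y z w : L (x *m Em) (y *m Ep) z w = 0.
Proof. by rewrite (pair_sym hL) V34b. Qed.
Lemma Vpm x y z w : L (x *m Ep) (y *m Ep) (z *m Em) (w *m Em) = 0.
Proof. by have := BL (x *m Ep) (y *m Ep) (z *m Em) (w *m Em); rewrite V12a V12b !addr0. Qed.
Lemma Vmp x y z w : L (x *m Em) (y *m Em) (z *m Ep) (w *m Ep) = 0.
Proof. by have := BL (x *m Em) (y *m Em) (z *m Ep) (w *m Ep); rewrite V12a V12b !addr0. Qed.

Lemma decompL x y z w :
  L x y z w = L (x *m Ep) (y *m Ep) (z *m Ep) (w *m Ep)
              + L (x *m Em) (y *m Em) (z *m Em) (w *m Em).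
Proof.
rewrite {1}(decomp x) {1}(decomp y) {1}(decomp z) {1}(decomp w).
rewrite !(TD1 mlL) !(TD2 mlL) !(TD3 mlL) !(TD4 mlL).
rewrite !V34a !V34b !V12a !V12b Vpm Vmp.
by rewrite !(addr0, add0r).
Qed.

Lemma half (E : 'M[R]_4) : E *m E = E -> \tr E = 2%:R ->
  exists K, forall x y z w,
    L (x *m E) (y *m E) (z *m E) (w *m E) = K * pi1 G (x *m E) (y *m E) (z *m E) (w *m E).
Proof.
move=> hEE htrE.
have hr : \rank E = 2%N.
  by have := trace_rank hEE; rewrite htrE => /eqP; rewrite eqr_nat => /eqP <-.
case: (basis2 hr) => r0 [r1 [h0 h1 hind hspan]].
have r0nz : r0 != 0.
  apply/eqP => e; have := hind 1 0; rewrite e scaler0 scale0r addr0 => /(_ erefl) [].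
  by move/eqP; rewrite oner_eq0.
have g00 := hpos r0nz.
set a := gform G r0 r1; set b := gform G r0 r0.
set v := (- a) *: r0 + b *: r1.
have vnz : v != 0.
  apply/eqP => /hind [_ hb]; move: g00; rewrite -/b hb ltxx //.
have gv := hpos vnz.
have ev : gform G v v = - b * pi1 G r0 r1 r0 r1.
  rewrite /v pi1K /Kt !(gformDl, gformDr, gformZl, gformZr).
  rewrite (gform_sym r1 r0 hGs) -/a -/b; ring.
have pnz : pi1 G r0 r1 r0 r1 != 0.
  apply/eqP => e0; move: gv; rewrite ev e0 mulr0 ltxx //.
exists (L r0 r1 r0 r1 / pi1 G r0 r1 r0 r1) => x y z w.
have memE (u : 'rV[R]_4) : (u *m E <= E)%MS := submxMl u E.
case: (hspan _ (memE x)) => ax [bx ->].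
case: (hspan _ (memE y)) => ay [b_y ->].
case: (hspan _ (memE z)) => az [bz ->].
case: (hspan _ (memE w)) => aw [bw ->].
rewrite (tensor2 mlL A12 A34) (tensor2 (pi1_ml G) (@pi1_A12 _ _ G) (@pi1_A34 _ _ G)).
by field.
Qed.

End WithL.
Lemma Kt_PP A B x y z w :
  Kt A B x y (z *m P) (w *m P) = Kt (A *m P^T) (B *m P^T) x y z w.
Proof. exact: Kt_mulP2. Qed.

Lemma main_equiv (L : tensor4 R 4) (hL : curvature_like L) :
  riemannian_P_tensor P L <->
  (forall x y z w : 'rV[R]_4,
     L x y z w = 8%:R^-1 * (tau G L * (pi1 G x y z w + pi2 G P x y z w)
                            + taustar G P L * pi3 G P x y z w)).
Proof.
split.
- case=> _ hPL.
  have [Kp hKp] := half hL EpEp trEp.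
  have [Km hKm] := half hL EmEm trEm.
  apply: (@formula_of_decomp L ((Kp + Km) / 4%:R) ((Kp - Km) / 4%:R)).
  move=> x y z w; rewrite (decompL hL hPL) hKp hKm pi1Ep pi1Em; by field.
- move=> H; split=> // x y z w.
  rewrite !H !pi1K !pi2K !pi3K !Kt_PP !GtPT; ring.
Qed.

End Main.

Unset Implicit Arguments.

Theorem theorem3p2 (R : realFieldType) (G P : 'M[R]_4)
  (hGP : almost_product G P) (htr : \tr P = 0)
  (L : tensor4 R 4) (hL : curvature_like L) :
  riemannian_P_tensor P L <->
  (forall x y z w : 'rV[R]_4,
     L x y z w = 8%:R^-1 * (tau G L * (pi1 G x y z w + pi2 G P x y z w)
                            + taustar G P L * pi3 G P x y z w)).
Proof. exact: main_equiv. Qed.
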